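(* Consider a repeater chain in the model described in the context with $M+N+1$ nodes labelled $1,\dots,M+N+1$. Suppose nodes $1,\dots,M$ are at fixed locations, with fixed distances between consecutive ones (so the lengths of edges $1,\dots,M-1$ are fixed constants). Suppose nodes $M$ and $M+N+1$ are a distance $L$ apart and the $N$ repeater nodes $M+1,\dots,M+N$ are placed along a straight line between them. Let $\ell_i\ge0$ be the distance between nodes $M+i-1$ and $M+i$ for $i=1,\dots,N+1$, with $\sum_i\ell_i=L$. Then the entangling rate $R$ of the chain, as a function of $(\ell_1,\dots,\ell_{N+1})$, is maximal when $\ell_i=L/(N+1)$ for all $i$.
   Context: Repeater-chain model (swap-ASAP, synchronized attempts). Edge $j$ connects nodes $j$ and $j+1$ and has length $l_j\ge0$ (km). Entanglement generation proceeds in synchronized rounds of duration $t_{\mathrm{att}}=\frac1c\max_jl_j$ with $c=200{,}000$ km/s. In each round, every edge not yet successful makes an attempt succeeding independently with probability $p_j=10^{-\alpha l_j/10}$, $\alpha=0.2\ \mathrm{km}^{-1}$. So the number of rounds $X_j$ until edge $j$ succeeds is geometric on $\{1,2,\dots\}$ with parameter $p_j$, the $X_j$ are independent, and end-to-end entanglement completes at time $T_{\mathrm{done}}=t_{\mathrm{att}}\max_jX_j$. The entangling rate is $R=1/\mathbb E[T_{\mathrm{done}}]$. *)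

(* Defs.v *)
From HB Require Import structures.
From mathcomp Require Import all_boot all_order all_algebra.
From mathcomp Require Import all_classical all_reals all_analysis.
Set Implicit Arguments. Unset Strict Implicit. Unset Printing Implicit Defensive.
Import Order.TTheory GRing.Theory Num.Theory.
Local Open Scope classical_set_scope.
Local Open Scope ring_scope.

Section Defs.
Variable R : realType.

(* attenuation alpha = 0.2 /km, speed of light in fibre c = 200000 km/s *)
Definition alpha : R := 2 / 10.
Definition clight : R := 2 * 10 ^+ 5.

Definition succ_prob (l : R) : R := 10 `^ (- (alpha * l / 10)).

(* P(X = k+1) for X geometric on {1,2,...} with parameter p *)
Definition geom_pmf (p : R) (k : nat) : R := p * (1 - p) ^+ k.

(* duration of one synchronized round *)
Definition t_att n (l : 'I_n -> R) : R := (\big[Num.max/0]_(j < n) l j) / clight.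

(* E[max_j X_j] for independent geometric X_j with parameters succ_prob (l j):
   expectation over the product pmf, indexing X_j = x j + 1. *)
Definition E_max_rounds n (l : 'I_n -> R) : \bar R :=
  (\esum_(x in [set: {ffun 'I_n -> nat}])
     (((\max_(j < n) (x j).+1)%N)%:R * \prod_(j < n) geom_pmf (succ_prob (l j)) (x j))%:E)%E.

Definition E_T_done n (l : 'I_n -> R) : R := t_att l * fine (E_max_rounds l).

Definition rate n (l : 'I_n -> R) : R := (E_T_done l)^-1.

(* edge lengths of the chain: the M-1 fixed edges, then the N+1 variable ones *)
Definition chain_lengths m k (d : 'I_m -> R) (ell : 'I_k -> R) : 'I_(m + k) -> R :=
  fun j => match fintype.split j with inl a => d a | inr b => ell b end.

End Defs.

(* Main.v *)
Require Import Defs.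
From HB Require Import structures.
From mathcomp Require Import all_boot all_order all_algebra.
From mathcomp Require Import all_classical all_reals all_analysis.
From mathcomp Require Import ring lra zify.
Import Order.TTheory GRing.Theory Num.Theory.
Local Open Scope ring_scope.

Section A.
Set Implicit Arguments. Unset Strict Implicit. Unset Printing Implicit Defensive.
Local Open Scope classical_set_scope.
Local Open Scope ring_scope.
Variable R : realType.
Import numFieldNormedType.Exports.
Lemma dG (k : nat) (kap x : R) :
  is_derive x 1 (fun s : R => (1 - (1 - expR (- s)) ^+ k) * expR (kap * s))
   ((1 - (1 - expR (- x)) ^+ k) * (expR (kap * x) * kap) -
     expR (kap * x) * (k%:R * (1 - expR (- x)) ^+ k.-1 * expR (- x))).
Proof.
have h1 : is_derive x 1 (fun s : R => expR (- s)) (- expR (- x)).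
  have := @is_derive1_comp R expR -%R x (expR (-x)) (-1) _ (is_deriveNid x 1).
  by rewrite mulrN1; apply.
have h2 : is_derive x 1 (fun s : R => expR (kap * s)) (expR (kap * x) * kap).
  have := @is_derive1_comp R expR (fun s => kap * s) x (expR (kap * x)) kap _ _.
  have hz : is_derive x 1 (fun s => kap * s) kap.
    have := @is_deriveZ R R^o R^o id kap x 1 1 (is_derive_id x 1).
    by rewrite /= /GRing.scale /= mulr1.
  exact.
have h3 : is_derive x 1 (fun s : R => 1 - expR (- s)) (expR (- x)).
  have := is_deriveB (is_derive_cst (1:R) x 1) h1.
  by rewrite sub0r opprK; apply.
have h4 := is_deriveX k h3.
have h5 : is_derive x 1 (fun s : R => 1 - (1 - expR (- s)) ^+ k)
   (- (k%:R * (1 - expR (- x)) ^+ k.-1 * expR (- x))).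
  have := is_deriveB (is_derive_cst (1:R) x 1) h4.
  rewrite sub0r /GRing.scale /= exprfctE.
  exact.
have := is_deriveM h5 h2.
move=> H.
rewrite [X in is_derive _ _ X](_ : _ = (fun s : R => 1 - (1 - expR (- s)) ^+ k) * (fun s : R => expR (kap * s))) //.
apply: (is_derive_eq H).
by rewrite /GRing.scale /= mulrN.
Qed.

Definition Sg (k : nat) (u : R) := \sum_(i < k) u ^+ i.

Lemma Sg_ge1 k u : (0 < k)%N -> 0 <= u -> 1 <= Sg k u.
Proof.
case: k => // k _ u0; rewrite /Sg big_ord_recl expr0 lerDl.
by apply: sumr_ge0 => i _; apply: exprn_ge0.
Qed.

Lemma one_subX k u : 1 - u ^+ k = (1 - u) * Sg k u.
Proof.
rewrite -{1}(expr1n R k) subrXX /Sg; congr (_ * _).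
by apply: eq_bigr => i _; rewrite expr1n mul1r.
Qed.

Lemma cross k u v : 0 <= u -> u <= v -> u ^+ k.-1 * Sg k v <= v ^+ k.-1 * Sg k u.
Proof.
move=> u0 uv; rewrite /Sg !mulr_sumr; apply: ler_sum => i _.
have v0 : 0 <= v := le_trans u0 uv.
have -> : k.-1 = (i + (k.-1 - i))%N by rewrite subnKC // -ltnS prednK // (leq_ltn_trans _ (ltn_ord i)).
rewrite !exprD.
rewrite [leLHS](_ : _ = (u ^+ i * v ^+ i) * u ^+ (k.-1 - i)); last by ring.
rewrite [leRHS](_ : _ = (u ^+ i * v ^+ i) * v ^+ (k.-1 - i)); last by ring.
apply: ler_wpM2l; first by rewrite mulr_ge0 // exprn_ge0.
by rewrite lerXn2r // nnegrE.
Qed.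

Lemma Gf_mvt k kap a b : a <= b ->
  exists2 c : R, c \in `[a, b]%R &
  (1 - (1 - expR (- b)) ^+ k) * expR (kap * b) - (1 - (1 - expR (- a)) ^+ k) * expR (kap * a) =
  ((1 - (1 - expR (- c)) ^+ k) * (expR (kap * c) * kap) -
     expR (kap * c) * (k%:R * (1 - expR (- c)) ^+ k.-1 * expR (- c))) * (b - a).
Proof.
move=> ab.
apply: (@MVT_segment R (fun s : R => (1 - (1 - expR (- s)) ^+ k) * expR (kap * s))
  (fun c => ((1 - (1 - expR (- c)) ^+ k) * (expR (kap * c) * kap) -
     expR (kap * c) * (k%:R * (1 - expR (- c)) ^+ k.-1 * expR (- c)))) a b ab).
  by move=> x _; apply: dG.
apply/continuous_subspaceT => r; apply/differentiable_continuous/derivable1_diffP.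
apply: ex_derive; apply: dG.
Qed.

Lemma Gp_eq k kap c :
  ((1 - (1 - expR (- c)) ^+ k) * (expR (kap * c) * kap) -
     expR (kap * c) * (k%:R * (1 - expR (- c)) ^+ k.-1 * expR (- c))) =
  expR (kap * c) * expR (- c) * (kap * Sg k (1 - expR (- c)) - k%:R * (1 - expR (- c)) ^+ k.-1).
Proof.
set E := expR (- c); rewrite one_subX; have -> : 1 - (1 - E) = E by ring.
ring.
Qed.


Lemma sign_le k u u0 : 0 <= u -> u <= u0 ->
  0 <= k.+1%:R * u0 ^+ k / Sg k.+1 u0 * Sg k.+1 u - k.+1%:R * u ^+ k.
Proof.
move=> u0' uu0.
have S0 : 0 < Sg k.+1 u0 by apply: (lt_le_trans ltr01); apply: Sg_ge1 => //; exact: le_trans uu0.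
rewrite subr_ge0 mulrAC ler_pdivlMr // -!mulrA ler_wpM2l //.
exact: (cross k.+1).
Qed.

Lemma sign_ge k u u0 : 0 <= u0 -> u0 <= u ->
  k.+1%:R * u0 ^+ k / Sg k.+1 u0 * Sg k.+1 u - k.+1%:R * u ^+ k <= 0.
Proof.
move=> u0' uu0.
have S0 : 0 < Sg k.+1 u0 by apply: (lt_le_trans ltr01); apply: Sg_ge1.
rewrite subr_le0 mulrAC ler_pdivrMr // -!mulrA ler_wpM2l //.
exact: (cross k.+1).
Qed.

Lemma u_mono a b : a <= b -> 1 - expR (- a) <= 1 - expR (- b) :> R.
Proof. by move=> ab; rewrite lerB // ler_expR lerN2. Qed.

Lemma u_ge0 a : 0 <= a -> 0 <= 1 - expR (- a) :> R.
Proof. by move=> a0; rewrite subr_ge0 expR_le1 oppr_le0. Qed.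

Lemma key_tangent k (s0 : R) : 0 <= s0 -> exists kap : R, forall s, 0 <= s ->
  1 - (1 - expR (- s)) ^+ k <= (1 - (1 - expR (- s0)) ^+ k) * expR (kap * (s0 - s)).
Proof.
move=> s00.
case: k => [|k]; first by exists 0 => s _; rewrite !expr0 subrr mul0r.
pose u0 := 1 - expR (- s0).
pose kap := k.+1%:R * u0 ^+ k / Sg k.+1 u0.
exists kap => s s0'.
pose Gf s := (1 - (1 - expR (- s)) ^+ k.+1) * expR (kap * s).
suff H : Gf s <= Gf s0.
  rewrite mulrBr expRB mulrA ler_pdivlMr ?expR_gt0 //.
have Hs : forall c, 0 <= c -> 0 <= expR (kap * c) * expR (- c) by move=> c _; rewrite mulr_ge0 ?expR_ge0.
case: (leP s s0) => [ss0|/ltW s0s].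
  have [c] := Gf_mvt k.+1 kap ss0; rewrite in_itv /= => /andP [sc cs0] E.
  rewrite -subr_ge0 /Gf E Gp_eq mulr_ge0 ?subr_ge0 //.
  apply: mulr_ge0; first by rewrite mulr_ge0 ?expR_ge0.
  by apply: sign_le; [apply: u_ge0; apply: (le_trans s0' sc) | apply: u_mono].
have [c] := Gf_mvt k.+1 kap s0s; rewrite in_itv /= => /andP [sc cs0] E.
rewrite -subr_le0 /Gf E Gp_eq mulr_le0_ge0 ?subr_ge0 //.
apply: mulr_ge0_le0; first by rewrite mulr_ge0 ?expR_ge0.
by apply: sign_ge; [apply: u_ge0 | apply: u_mono].
Qed.

Lemma h_ge0 k s : 0 <= s -> 0 <= 1 - (1 - expR (- s)) ^+ k :> R.
Proof.
move=> s0; rewrite subr_ge0 exprn_ile1 ?u_ge0 //.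
Qed.

Lemma prod_h_le k n (v : 'I_n -> R) (m : R) : (0 < n)%N -> (forall i, 0 <= v i) ->
  \sum_i v i = n%:R * m ->
  \prod_i (1 - (1 - expR (- v i)) ^+ k) <= (1 - (1 - expR (- m)) ^+ k) ^+ n.
Proof.
move=> n0 v0 sv.
have m0 : 0 <= m.
  have : 0 <= n%:R * m by rewrite -sv; apply: sumr_ge0 => i _.
  by rewrite pmulr_rge0 // ltr0n.
have [kap Hk] := key_tangent k m0.
apply: (@le_trans _ _ (\prod_(i < n) ((1 - (1 - expR (- m)) ^+ k) * expR (kap * (m - v i))))).
  by apply: ler_prod => i _; rewrite h_ge0 //= Hk.
rewrite big_split /= prodr_const card_ord -expR_sum.
have -> : \sum_(i < n) kap * (m - v i) = 0.
  by rewrite -mulr_sumr sumrB sv sumr_const card_ord mulr_natl subrr mulr0.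
by rewrite expR0 mulr1.
Qed.
End A.

Section B.
Set Implicit Arguments. Unset Strict Implicit. Unset Printing Implicit Defensive.
Local Open Scope classical_set_scope.
Local Open Scope ring_scope.
Variable R : realType.

Definition liftf n K (f : {ffun 'I_n -> 'I_K}) : {ffun 'I_n -> nat} := [ffun j => nat_of_ord (f j)].
Definition term n (p : 'I_n -> R) (x : {ffun 'I_n -> nat}) : R :=
  ((\max_(j < n) (x j).+1)%N%:R * \prod_(j < n) geom_pmf (p j) (x j)).
Definition Gk n (p : 'I_n -> R) (k : nat) : R := \prod_(j < n) (1 - (1 - p j) ^+ k).

Lemma ind_max n K (f : {ffun 'I_n -> 'I_K}) (k : nat) :
  1 - \prod_(j < n) ((f j < k)%N%:R : R) = ((k < \max_(j < n) (f j).+1)%N)%:R.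
Proof.
case: (boolP [forall j, (f j < k)%N]) => [/forallP H|].
  have -> : (k < \max_(j < n) (f j).+1)%N = false.
    by apply/negbTE; rewrite -leqNgt; apply/bigmax_leqP => j _; apply: H.
  by rewrite big1 ?subrr // => j _; rewrite H.
rewrite negb_forall => /existsP [j Hj].
have -> : (k < \max_(j < n) (f j).+1)%N.
  by apply: (leq_trans _ (leq_bigmax j)); rewrite ltnS leqNgt.
by rewrite (bigD1 j) //= (negbTE Hj) mul0r subr0.
Qed.

Lemma sum_lt M K : (M <= K)%N -> \sum_(k < K) ((k < M)%N%:R : R) = M%:R.
Proof.
move=> MK; suff -> : \sum_(k < K) ((k < M)%N%:R : R) = (minn M K)%:R by rewrite (minn_idPl MK).
elim: K {MK} => [|K IH]; first by rewrite big_ord0 minn0.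
rewrite big_ord_recr /= IH -natrD; congr (_%:R).
case: (ltnP K M) => H /=; lia.
Qed.


Lemma term_lift n K (p : 'I_n -> R) (f : {ffun 'I_n -> 'I_K}) : term p (liftf f) =
  \sum_(k < K) (\prod_(j < n) geom_pmf (p j) (f j) - \prod_(j < n) ((f j < k)%N%:R * geom_pmf (p j) (f j))).
Proof.
rewrite /term /liftf.
under eq_bigr do rewrite ffunE.
under [in X in _ * X]eq_bigr do rewrite ffunE.
have MK : (\max_(j < n) (f j).+1 <= K)%N by apply/bigmax_leqP => j _; exact: ltn_ord.
rewrite -(sum_lt MK) mulr_suml; apply: eq_bigr => k _.
by rewrite -ind_max mulrBl mul1r [X in _ = _ - X]big_split.
Qed.

Lemma geom_sum (p : R) K : \sum_(i < K) geom_pmf p i = 1 - (1 - p) ^+ K.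
Proof.
rewrite one_subX /geom_pmf -mulr_sumr /Sg; congr (_ * _); ring.
Qed.

Lemma sum_ind_geom (p : R) K k : (k <= K)%N ->
  \sum_(i < K) ((i < k)%N%:R * geom_pmf p i) = 1 - (1 - p) ^+ k.
Proof.
move=> kK; rewrite -geom_sum (big_ord_widen K (fun i => geom_pmf p i) kK) big_mkcond /=.
by rewrite [RHS]big_mkcond /=; apply: eq_bigr => i _; case: (i < k)%N; rewrite /= ?mulr1n ?mulr0n ?mul1r ?mul0r.
Qed.

Lemma box_sum n K (p : 'I_n -> R) :
  \sum_(f : {ffun 'I_n -> 'I_K}) term p (liftf f) = \sum_(k < K) (Gk p K - Gk p k).
Proof.
under eq_bigr do rewrite term_lift.
rewrite exchange_big /=; apply: eq_bigr => k _.
rewrite sumrB -(bigA_distr_bigA (fun j (i : 'I_K) => geom_pmf (p j) i)).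
rewrite -(bigA_distr_bigA (fun j (i : 'I_K) => (i < k)%N%:R * geom_pmf (p j) i)).
congr (_ - _); apply: eq_bigr => j _; first exact: geom_sum.
by apply: sum_ind_geom; apply: ltnW.
Qed.

Definition Ep n (p : 'I_n -> R) : \bar R :=
  (\esum_(x in [set: {ffun 'I_n -> nat}]) (term p x)%:E)%E.

Lemma EpE n (l : 'I_n -> R) : E_max_rounds l = Ep (fun j => succ_prob (l j)).
Proof. by []. Qed.

Lemma term_ge0 n (p : 'I_n -> R) x : (forall j, 0 <= p j <= 1) -> 0 <= term p x.
Proof.
move=> hp; rewrite /term mulr_ge0 //; apply: prodr_ge0 => j _.
have /andP [h0 h1] := hp j.
by rewrite /geom_pmf mulr_ge0 // exprn_ge0 // subr_ge0.
Qed.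

Lemma fsum_fin (T : finType) (F : T -> \bar R) :
  (\sum_(x \in [set: T]) F x = \sum_(x : T) F x)%E.
Proof.
rewrite (fsbigE (enum T)) ?enum_uniq //.
  by rewrite big_enum_cond /=; apply: eq_bigl => x; rewrite in_setT.
by move=> x _; rewrite mem_enum.
Qed.

Lemma liftf_inj n K : injective (@liftf n K).
Proof.
move=> f g H; apply/ffunP => j; apply: val_inj.
by have := congr1 (fun h : {ffun _ -> nat} => h j) H; rewrite /liftf !ffunE.
Qed.

Lemma box_le_E n (p : 'I_n -> R) K : (forall j, 0 <= p j <= 1) ->
  ((\sum_(k < K) (Gk p K - Gk p k))%:E <= Ep p)%E.
Proof.
move=> hp; rewrite -box_sum; apply: esum_ge.
exists ((@liftf n K) @` setT).
  by split => //; apply: finite_image; apply: finite_finset.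
rewrite fsbig_image; last by move=> x y _ _; apply: liftf_inj.
by rewrite fsum_fin sumEFin.
Qed.

Lemma E_le_box n (p : 'I_n -> R) (B : \bar R) : (forall j, 0 <= p j <= 1) ->
  (forall K, ((\sum_(k < K) (Gk p K - Gk p k))%:E <= B)%E) -> (Ep p <= B)%E.
Proof.
move=> hp hB; apply: ge_ereal_sup => _ [X [finX _] <-].
pose K := (\max_(x <- finmap.enum_fset (fset_set X)) \max_(j < n) x j).+1.
apply: (le_trans _ (hB K)); rewrite -box_sum -sumEFin.
have -> : (\sum_(f : {ffun 'I_n -> 'I_K}) (term p (liftf f))%:E)%E =
    (\sum_(x \in (@liftf n K) @` setT) (term p x)%:E)%E.
  by rewrite fsbig_image ?fsum_fin // => x y _ _; apply: liftf_inj.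
apply: lee_fsum_nneg_subset => //.
- by apply: finite_image; apply: finite_finset.
- move=> x; rewrite inE => Xx.
  have xK : forall j, (x j < K)%N.
    move=> j; rewrite ltnS; apply: (leq_trans (leq_bigmax j)).
    by apply: leq_bigmax_seq => //; rewrite in_fset_set // inE.
  rewrite inE; exists [ffun j => Ordinal (xK j)] => //.
  by apply/ffunP => j; rewrite /liftf !ffunE.
- by move=> t _; rewrite lee_fin term_ge0.
Qed.

Lemma union_gen m (a : 'I_m -> R) : (forall j, 0 <= a j <= 1) ->
  1 - \prod_(j < m) (1 - a j) <= \sum_(j < m) a j.
Proof.
elim: m a => [|m IH] a ha; first by rewrite big_ord0 big_ord0 subrr.
rewrite big_ord_recr big_ord_recr /=.
have H1 := IH (fun j => a (widen_ord (leqnSn m) j)) (fun j => ha _).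
have H2 : 0 <= \prod_(i < m) (1 - a (widen_ord (leqnSn m) i)).
  by apply: prodr_ge0 => j _; have /andP [_ h] := ha (widen_ord (leqnSn m) j); rewrite subr_ge0.
have H3 : \prod_(i < m) (1 - a (widen_ord (leqnSn m) i)) <= 1.
  apply: prodr_ile1 => j _; have /andP [h0 h] := ha (widen_ord (leqnSn m) j).
  by rewrite subr_ge0 h lerBlDr lerDl.
have /andP [h0 h1] := ha ord_max.
move: H1 H2 H3; set P := \prod_(i < m) _; set S := \sum_(i < m) _ => H1 H2 H3.
nra.
Qed.

Lemma pow_bound (q : R) K : 0 <= q <= 1 -> K.+1%:R * q ^+ K * (1 - q) <= 1.
Proof.
move=> /andP [q0 q1].
have H : K.+1%:R * q ^+ K <= Sg K.+1 q.
  have -> : K.+1%:R * q ^+ K = \sum_(i < K.+1) q ^+ K by rewrite sumr_const card_ord mulr_natl.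
  rewrite /Sg.
  by apply: ler_sum => i _; apply: ler_wiXn2l => //; rewrite -ltnS.
apply: (le_trans (ler_wpM2r _ H)); first by rewrite subr_ge0.
by rewrite mulrC -one_subX lerBlDr lerDl exprn_ge0.
Qed.

Lemma Sg_bound (q : R) K : 0 <= q < 1 -> Sg K q <= (1 - q)^-1.
Proof.
move=> /andP [q0 q1]; have pq : 0 < 1 - q by rewrite subr_gt0.
rewrite -(ler_pM2l pq) mulfV ?gt_eqF // -one_subX lerBlDr lerDl exprn_ge0 //.
Qed.

Section Gprops.
Variables (n : nat) (p : 'I_n -> R).
Hypothesis hp : forall j, 0 < p j <= 1.

Lemma q01 j : 0 <= 1 - p j <= 1.
Proof. by have /andP [h0 h1] := hp j; rewrite subr_ge0 h1 lerBlDr lerDl ltW. Qed.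

Lemma fac01 j k : 0 <= 1 - (1 - p j) ^+ k <= 1.
Proof.
have /andP [h0 h1] := q01 j.
by rewrite subr_ge0 exprn_ile1 //= lerBlDr lerDl exprn_ge0.
Qed.

Lemma Gk_ge0 k : 0 <= Gk p k.
Proof. by apply: prodr_ge0 => j _; have /andP [] := fac01 j k. Qed.

Lemma Gk_le1 k : Gk p k <= 1.
Proof. by apply: prodr_ile1 => j _; exact: fac01. Qed.

Lemma Gk_mono k K : (k <= K)%N -> Gk p k <= Gk p K.
Proof.
move=> kK; apply: ler_prod => j _; have /andP [a _] := fac01 j k; rewrite a /=.
have /andP [h0 h1] := q01 j.
by rewrite lerB // ler_wiXn2l.
Qed.

Lemma union_bound k : 1 - Gk p k <= \sum_(j < n) (1 - p j) ^+ k.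
Proof.
apply: union_gen => j; have /andP [h0 h1] := q01 j.
by rewrite exprn_ge0 //= exprn_ile1.
Qed.

Lemma partial_bound K : \sum_(k < K) (1 - Gk p k) <= \sum_(j < n) (p j)^-1.
Proof.
apply: le_trans; first by apply: ler_sum => k _; apply: union_bound.
rewrite exchange_big /=; apply: ler_sum => j _.
have /andP [h0 h1] := hp j.
have H : 0 <= 1 - p j < 1 by rewrite subr_ge0 h1 /= ltrBlDr ltrDl.
have := Sg_bound K H; rewrite /Sg; have -> : 1 - (1 - p j) = p j by ring.
by [].
Qed.

Lemma tail_bound K : 1 - Gk p K <= (\sum_(j < n) (p j)^-1) / K.+1%:R.
Proof.
apply: (le_trans (union_bound K)); rewrite mulr_suml; apply: ler_sum => j _.
have /andP [h0 h1] := hp j.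
have := pow_bound K (q01 j); have -> : 1 - (1 - p j) = p j by ring.
move=> H.
rewrite -invfM -div1r ler_pdivlMr ?mulr_gt0 // ?ltr0Sn //.
suff -> : (1 - p j) ^+ K * (p j * K.+1%:R) = K.+1%:R * (1 - p j) ^+ K * p j by [].
by ring.
Qed.

End Gprops.

Lemma E_lower n (p : 'I_n -> R) K' : (forall j, 0 < p j <= 1) ->
  ((\sum_(k < K') (1 - Gk p k))%:E <= Ep p)%E.
Proof.
move=> hp.
have hp' : forall j, 0 <= p j <= 1 by move=> j; have /andP [a b] := hp j; rewrite ltW.
set A := \sum_(k < K') _; set C := \sum_(j < n) (p j)^-1.
have C0 : 0 <= C by apply: sumr_ge0 => j _; have /andP [a _] := hp j; rewrite invr_ge0 ltW.
apply/lee_addgt0Pr => e e0.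
pose K := maxn K' (Num.bound (K'%:R * C / e)).
have KK : (K' <= K)%N := leq_maxl _ _.
apply: le_trans; last exact: (leeD2r _ (box_le_E K hp')).
rewrite -EFinD lee_fin.
have H1 : \sum_(k < K') (Gk p K - Gk p k) <= \sum_(k < K) (Gk p K - Gk p k).
  rewrite (big_ord_widen K (fun k => Gk p K - Gk p k) KK) [leRHS](bigID (fun k : 'I_K => (k < K')%N)) /=.
  rewrite lerDl; apply: sumr_ge0 => k _; rewrite subr_ge0; apply: Gk_mono => //.
  exact: ltnW.
have H2 : \sum_(k < K') (Gk p K - Gk p k) = A - K'%:R * (1 - Gk p K).
  by rewrite /A !sumrB !sumr_const !card_ord; ring.
have H3 : K'%:R * (1 - Gk p K) <= e.
  apply: (le_trans (ler_wpM2l (ler0n _ _) (tail_bound hp K))).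
  have hb : K'%:R * C / e < K.+1%:R.
    apply: (lt_le_trans (archi_boundP _)); first by rewrite divr_ge0 ?mulr_ge0 // ltW.
    by rewrite ler_nat; apply: leqW; apply: leq_maxr.
  move: hb; rewrite ltr_pdivrMr // => hb.
  by rewrite mulrA ler_pdivrMr ?ltr0Sn // [e * _]mulrC ltW.
move: H1; rewrite H2; lra.
Qed.

End B.

Section C.
Set Implicit Arguments. Unset Strict Implicit. Unset Printing Implicit Defensive.
Local Open Scope classical_set_scope.
Local Open Scope ring_scope.
Variable R : realType.

Lemma chain_l m k (d : 'I_m -> R) (ell : 'I_k -> R) (i : 'I_m) :
  chain_lengths d ell (lshift k i) = d i.
Proof. by rewrite /chain_lengths (unsplitK (inl _ i)). Qed.

Lemma chain_r m k (d : 'I_m -> R) (ell : 'I_k -> R) (i : 'I_k) :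
  chain_lengths d ell (rshift m i) = ell i.
Proof. by rewrite /chain_lengths (unsplitK (inr _ i)). Qed.

Definition cc : R := alpha R / 10 * ln 10.

Lemma cc_gt0 : 0 < cc.
Proof. by rewrite /cc /alpha mulr_gt0 ?divr_gt0 // ln_gt0 // ltr1n. Qed.

Lemma succ_probE (x : R) : succ_prob x = expR (- (cc * x)).
Proof.
rewrite /succ_prob /powR (negbTE (_ : (10 : R) != 0)) ?pnatr_eq0 //.
by congr expR; rewrite /cc; ring.
Qed.

Lemma succ_prob01 (x : R) : 0 <= x -> 0 < succ_prob x <= 1.
Proof.
move=> x0; rewrite succ_probE expR_gt0 /= expR_le1 oppr_le0 mulr_ge0 //.
exact: ltW cc_gt0.
Qed.

Lemma Gk_chain m N (d : 'I_m -> R) (hd : forall i, 0 <= d i) (L : R)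
  (ell : 'I_N.+1 -> R) (hell : forall i, 0 <= ell i) (hsum : \sum_(i < N.+1) ell i = L) k :
  Gk (fun j => succ_prob (chain_lengths d ell j)) k <=
  Gk (fun j => succ_prob (chain_lengths d (fun _ : 'I_N.+1 => L / N.+1%:R) j)) k.
Proof.
have h01 : forall x : R, 0 <= x -> 0 <= 1 - (1 - succ_prob x) ^+ k.
  move=> x x0; have /andP [a b] := succ_prob01 x0.
  by rewrite subr_ge0 exprn_ile1 // ?subr_ge0 // lerBlDr lerDl ltW.
have L0 : 0 <= L by rewrite -hsum; apply: sumr_ge0.
rewrite /Gk !big_split_ord /=.
apply: ler_pM.
- by apply: prodr_ge0 => i _; rewrite chain_l h01.
- by apply: prodr_ge0 => i _; rewrite chain_r h01.
- by rewrite le_eqVlt; apply/orP; left; apply/eqP; apply: eq_bigr => i _; rewrite !chain_l.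
under eq_bigr do rewrite chain_r succ_probE.
under [in X in _ <= X]eq_bigr do rewrite chain_r succ_probE.
rewrite prodr_const card_ord.
apply: (prod_h_le k (v := fun i => cc * ell i)) => //.
- by move=> i; rewrite mulr_ge0 // ltW // cc_gt0.
- by rewrite -mulr_sumr hsum; field.
Qed.

Lemma max_ge m (l : 'I_m -> R) j : l j <= \big[Num.max/0]_(i < m) l i.
Proof. exact: le_bigmax. Qed.

End C.


Theorem mainTheorem5 (R : realType) (M N : nat) (hM : (1 <= M)%N)
  (d : 'I_(M - 1) -> R) (hd : forall i, 0 <= d i)
  (L : R) (hL : 0 <= L)
  (ell : 'I_N.+1 -> R) (hell : forall i, 0 <= ell i)
  (hsum : \sum_(i < N.+1) ell i = L) :
  rate (chain_lengths d ell) <=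
  rate (chain_lengths d (fun _ : 'I_N.+1 => L / N.+1%:R)).
Proof.
have [L0|Lne] := eqVneq L 0.
  have e0 : forall i, ell i = 0.
    move=> i; apply: (@psumr_eq0P _ _ (fun _ => true) ell (fun i _ => hell i)) => //.
    by rewrite hsum L0.
  have -> : ell = (fun _ => L / N.+1%:R) by apply: boolp.funext => i; rewrite e0 L0 mul0r.
  exact: lexx.
have Lpos : 0 < L by rewrite lt_def Lne hL.
have LN : 0 < L / N.+1%:R by rewrite divr_gt0 // ltr0Sn.
have hl1 : forall j, 0 <= chain_lengths d ell j.
  by move=> j; rewrite /chain_lengths; case: fintype.split.
have hl2 : forall j, 0 <= chain_lengths d (fun _ : 'I_N.+1 => L / N.+1%:R) j.
  by move=> j; rewrite /chain_lengths; case: fintype.split => // b; rewrite ltW.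
have HG := Gk_chain hd hell hsum.
rewrite /rate /E_T_done !EpE.
move: HG hl1 hl2.
set l1 := chain_lengths d ell; set l2 := chain_lengths d _.
move=> HG hl1 hl2.
have hp1 : forall j, 0 < succ_prob (l1 j) <= 1 := fun j => succ_prob01 (hl1 j).
have hp2 : forall j, 0 < succ_prob (l2 j) <= 1 := fun j => succ_prob01 (hl2 j).
have hp1' : forall j, 0 <= succ_prob (l1 j) <= 1.
  by move=> j; have /andP [a b] := hp1 j; rewrite ltW.
have hp2' : forall j, 0 <= succ_prob (l2 j) <= 1.
  by move=> j; have /andP [a b] := hp2 j; rewrite ltW.
set p1 := fun j => succ_prob (l1 j).
set p2 := fun j => succ_prob (l2 j).
have E21 : (Ep p2 <= Ep p1)%E.
  apply: E_le_box => // K; apply: le_trans; last exact: (E_lower K hp1).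
  rewrite lee_fin; apply: ler_sum => k _; apply: lerB; first exact: Gk_le1.
  exact: HG.
have E2C : (Ep p2 <= (\sum_j (p2 j)^-1)%:E)%E.
  apply: E_le_box => // K; rewrite lee_fin; apply: le_trans (partial_bound hp2 K).
  by apply: ler_sum => k _; apply: lerB; first exact: Gk_le1.
have E21' : (1%:E <= Ep p2)%E.
  have := E_lower 1 hp2; rewrite big_ord1 /Gk.
  rewrite (bigD1 (rshift (M - 1) (@ord0 N))) //= expr0 subrr mul0r subr0.
  by [].
have E2fin : Ep p2 \is a fin_num.
  rewrite ge0_fin_numE; first exact: le_lt_trans E2C (ltry _).
  exact: le_trans E21'.
set e2 := fine (Ep p2).
have E2e : Ep p2 = e2%:E by rewrite fineK.
have e21 : 1 <= e2 by rewrite -lee_fin -E2e.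
have cl : 0 < clight R by rewrite /clight mulr_gt0 // exprn_gt0.
have X1ge : forall j, l1 j <= \big[Num.max/0]_(i < M - 1 + N.+1) l1 i := fun j => max_ge l1 j.
have T2pos : 0 < t_att l2.
  rewrite /t_att divr_gt0 //; apply: (lt_le_trans _ (max_ge l2 (rshift (M - 1) (@ord0 N)))).
  by rewrite /l2 chain_r.
have T21 : t_att l2 <= t_att l1.
  rewrite /t_att ler_pM2r ?invr_gt0 //; apply: bigmax_le.
    by apply: le_trans (hl1 (rshift (M - 1) (@ord0 N))) (X1ge _).
  move=> j _; rewrite /l2 /chain_lengths; case E: (fintype.split j) => [a|b].
    by apply: le_trans (X1ge (lshift _ a)); rewrite /l1 chain_l.
  rewrite ler_pdivrMr ?ltr0Sn // -hsum.
  have -> : \big[Num.max/0]_(i < M - 1 + N.+1) l1 i * N.+1%:R =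
      \sum_(i < N.+1) \big[Num.max/0]_(i < M - 1 + N.+1) l1 i by rewrite sumr_const card_ord mulr_natr.
  by apply: ler_sum => i _; apply: le_trans (X1ge (rshift _ i)); rewrite /l1 chain_r.
have T1pos : 0 < t_att l1 := lt_le_trans T2pos T21.

have : (0 <= Ep p1)%E by apply: esum_ge0 => x _; rewrite lee_fin term_ge0.
have e2p : 0 < e2 by apply: lt_le_trans e21.
case E1: (Ep p1) => [r1| |] // _.
  have r1e2 : e2 <= r1 by rewrite -lee_fin -E2e -E1.
  have r1p : 0 < r1 by apply: lt_le_trans r1e2.
  rewrite /= lef_pV2 ?posrE ?(mulr_gt0 T1pos r1p) ?(mulr_gt0 T2pos e2p) //.
  by apply: ler_pM => //; rewrite ltW.
have -> : fine (+oo : \bar R) = 0 by [].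
rewrite mulr0 invr0 invr_ge0; exact: mulr_ge0 (ltW T2pos) (ltW e2p).
Qed.
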